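(* Let $n\ge 2$, $d\ge 2$ and $\mathbf{m}\in\mathbb{N}^n$ with $|\mathbf{m}|=d$ and $\max(\mathbf{m})<d-1$. Then $\mathcal{A}_{n,d}\setminus\mathcal{A}_{n,d,\mathbf{m}}=\{\mathbf{m}\}$.
   Context: For $\mathbf{a}\in\mathbb{N}^n$, $|\mathbf{a}|=\sum_i a_i$ and $\max(\mathbf{a})=\max_i a_i$. $T_{n,d}=\{\mathbf{a}\in\mathbb{N}^n:|\mathbf{a}|=d\}$; $\mathcal{A}_{n,d}$ is the (additive) semigroup generated by $T_{n,d}$; for $\mathbf{m}\in T_{n,d}$, $\mathcal{A}_{n,d,\mathbf{m}}$ is the semigroup generated by $T_{n,d}\setminus\{\mathbf{m}\}$. *)

(* Defs.v *)
From mathcomp Require Import all_boot.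
Set Implicit Arguments. Unset Strict Implicit. Unset Printing Implicit Defensive.

Definition vec (n : nat) := {ffun 'I_n -> nat}.

Definition vsize n (a : vec n) : nat := \sum_(i < n) a i.

Definition vmax n (a : vec n) : nat := \max_(i < n) a i.

Definition vadd n (a b : vec n) : vec n := [ffun i => a i + b i].

Inductive semigroup_gen n (S : vec n -> Prop) : vec n -> Prop :=
  | sg_base a : S a -> semigroup_gen S a
  | sg_add a b : semigroup_gen S a -> semigroup_gen S b ->
                 semigroup_gen S (vadd a b).

Definition T n d (a : vec n) : Prop := vsize a = d.

Definition A n d : vec n -> Prop := semigroup_gen (@T n d).

Definition Am n d (m : vec n) : vec n -> Prop :=
  semigroup_gen (fun a => T d a /\ a <> m).

(* Main.v *)
Require Import Defs.
From mathcomp Require Import all_boot.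
From mathcomp Require Import zify.
Set Implicit Arguments. Unset Strict Implicit. Unset Printing Implicit Defensive.

Definition sh n (i j : 'I_n) (v : vec n) : vec n :=
  [ffun k => if k == i then (v k).-1 else if k == j then (v k).+1 else v k].

Lemma vsize_add n (a b : vec n) : vsize (vadd a b) = vsize a + vsize b.
Proof. by rewrite /vsize -big_split; apply eq_bigr => i _; rewrite ffunE. Qed.

Lemma vaddC n (a b : vec n) : vadd a b = vadd b a.
Proof. by apply/ffunP => k; rewrite !ffunE addnC. Qed.

Lemma vadd_canc n (a b x : vec n) : vadd a x = vadd b x -> a = b.
Proof.
move=> h; apply/ffunP => k; have := congr1 (fun f : vec n => f k) h.
by rewrite !ffunE => /eqP; rewrite eqn_add2r => /eqP.
Qed.

Lemma vsize_sh n (i j : 'I_n) (v : vec n) : i != j -> 0 < v i ->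
  vsize (sh i j v) = vsize v.
Proof.
move=> ij vi; rewrite /vsize (bigD1 i) //= (bigD1 j) //=; last by rewrite eq_sym.
rewrite [in RHS](bigD1 i) //= [in RHS](bigD1 j) //=; last by rewrite eq_sym.
rewrite !ffunE eqxx eq_sym (negbTE ij) eqxx.
have -> : \sum_(k < n | (k != i) && (k != j)) sh i j v k =
          \sum_(k < n | (k != i) && (k != j)) v k.
  apply eq_bigr => k /andP [ki kj]; by rewrite ffunE (negbTE ki) (negbTE kj).
rewrite !addnA; congr (_ + _); lia.
Qed.

Lemma keyL n d (m c : vec n) (i j : 'I_n) : i != j -> 0 < m i -> 0 < c j ->
  vsize m = d -> vsize c = d -> sh i j m != c -> Am d m (vadd m c).
Proof.
move=> ij mi cj sm sc ne.
have e : vadd m c = vadd (sh i j m) (sh j i c).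
  apply/ffunP => k; rewrite !ffunE.
  have [->|ki] := eqVneq k i.
    rewrite (negbTE ij); lia.
  case: eqP => [->|_]; lia.
rewrite e; apply: sg_add; apply: sg_base; split.
- by rewrite /T vsize_sh.
- move/ffunP/(_ j); rewrite ffunE eq_sym (negbTE ij) eqxx; move=> h; exact: (n_Sn _ (esym h)).
- by rewrite /T vsize_sh // eq_sym.
- move=> H; move/eqP: ne; apply; rewrite H vaddC in e.
  by rewrite (vadd_canc e).
Qed.

Lemma le_vmax n (m : vec n) k : m k <= vmax m.
Proof. by rewrite /vmax; apply: (leq_bigmax_cond k). Qed.

Lemma main_comb n d (m c : vec n) : 2 <= d -> vsize m = d -> vmax m < d - 1 ->
  vsize c = d -> Am d m (vadd m c).
Proof.
move=> d2 sm mx sc.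
have [j cj] : exists j, 0 < c j.
  apply/existsP; apply/negP => /existsP H.
  have : vsize c = 0.
    rewrite /vsize big1 // => k _; apply/eqP; rewrite -leqn0 leqNgt.
    by apply/negP => h; apply: H; exists k.
  lia.
have mj := le_vmax m j.
have [i /andP [ij mi]] : exists i, (i != j) && (0 < m i).
  apply/existsP; apply/negP => /existsP H.
  have : vsize m = m j.
    rewrite /vsize (bigD1 j) //= big1 ?addn0 // => k kj; apply/eqP.
    rewrite -leqn0 leqNgt; apply/negP => h; apply: H; exists k; by rewrite kj.
  lia.
have [ne|eq] := boolP (sh i j m != c); first exact: keyL ne.
move/negPn/eqP: eq => ec.
case: (boolP [exists i', [&& i' != j, i' != i & 0 < m i']]) =>
   [/existsP [i' /and3P [i'j i'i mi']] | /existsP H].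
- apply: (keyL (i := i') (j := j)) => //.
  apply/negP => /eqP/ffunP/(_ i); have e1 : (i == i') = false by rewrite eq_sym (negbTE i'i).
  rewrite -ec !ffunE e1 eqxx; lia.
-   have smij : vsize m = m i + m j.
    rewrite /vsize (bigD1 i) //= (bigD1 j) //=; last by rewrite eq_sym.
    rewrite big1 ?addn0 // => k /andP [ki kj]; apply/eqP.
    rewrite -leqn0 leqNgt; apply/negP => h; apply: H; exists k; by rewrite ki kj h.
  have mi2 := le_vmax m i.
  have ci : 0 < c i by rewrite -ec ffunE eqxx; lia.
  apply: (keyL (i := j) (j := i)) => //; first by rewrite eq_sym.
    lia.
  apply/negP => /eqP/ffunP/(_ j); have e1 : (j == i) = false by rewrite eq_sym (negbTE ij).
  rewrite -ec !ffunE e1; case: eqP => // _; lia.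
Qed.

Lemma vaddA n (a b c : vec n) : vadd a (vadd b c) = vadd (vadd a b) c.
Proof. by apply/ffunP => k; rewrite !ffunE addnA. Qed.

Lemma Am_addm n d (m y : vec n) : (forall c, T d c -> Am d m (vadd m c)) ->
  Am d m y -> Am d m (vadd m y).
Proof.
move=> Hc; elim => [a [Ta _]|a b _ IHa Hb _]; first exact: Hc.
by rewrite vaddA; apply: sg_add.
Qed.

Lemma A_cases n d (m x : vec n) : vsize m = d ->
  (forall c, T d c -> Am d m (vadd m c)) ->
  A d x -> x = m \/ Am d m x.
Proof.
move=> sm Hc; elim => [a Ta|a b _ [->|Ha] _ [->|Hb]].
- case: (boolP (a == m)) => [/eqP ->|/eqP ne]; first by left.
  by right; apply: sg_base.
- by right; apply: Hc; rewrite /T.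
- by right; apply: Am_addm.
- by right; rewrite vaddC; apply: Am_addm.
- by right; apply: sg_add.
Qed.

Lemma sg_size n d (S : vec n -> Prop) x : (forall a, S a -> vsize a = d) ->
  semigroup_gen S x -> S x \/ 2 * d <= vsize x.
Proof.
move=> HS; elim => [a Sa|a b _ IHa _ IHb]; first by left.
right; rewrite vsize_add.
case: IHa => [/HS ->|h1]; case: IHb => [/HS ->|h2]; lia.
Qed.

Theorem lemma2p17 (n d : nat) (m : vec n) :
  2 <= n -> 2 <= d -> vsize m = d -> vmax m < d - 1 ->
  forall x : vec n, (A d x /\ ~ Am d m x) <-> x = m.
Proof.
move=> n2 d2 sm mx x; split.
- move=> [Ax nAm].
  have Hc : forall c, T d c -> Am d m (vadd m c).
    by move=> c Tc; apply: main_comb.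
  by case: (A_cases sm Hc Ax) => // h; case: nAm.
- move=> ->; split; first by apply: sg_base.
  move=> /(sg_size (d := d)) [].
  + by move=> a [].
  + by case.
  + rewrite sm; lia.
Qed.
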